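(* Let $f(t)=\sum_{n=1}^{\infty}t^{n}/n^{n}=t\int_0^1 x^{-tx}\,dx$. Then, as $t\to+\infty$, $$f(t)=\sqrt{\frac{2\pi t}{e}}\left(1-\frac{e}{24t}+O(t^{-2})\right)\exp\frac{t}{e}.$$
   Context: $x^{-tx}=\exp(-tx\ln x)$ for $x\in(0,1]$. *)

(* Defs.v *)
From Stdlib Require Import Reals.
From Coquelicot Require Import Coquelicot.
Open Scope R_scope.

(* n-th term (n >= 1, shifted index k = n-1) of f(t) = sum_{n>=1} t^n / n^n *)
Definition fterm (t : R) (k : nat) : R := t ^ (S k) / (INR (S k)) ^ (S k).

Definition fser (t : R) : R := Series (fterm t).

(* x^{-tx} := exp(-t x ln x) on (0,1]; at x = 0 Stdlib's ln 0 = 0 gives the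
   continuous extension value 1 (a single point does not affect the integral). *)
Definition integrand (t x : R) : R := exp (- t * x * ln x).

(* Main.v *)
Require Import Defs.
From Stdlib Require Import Reals Lra Psatz Arith Factorial.
From Coquelicot Require Import Coquelicot.
Open Scope R_scope.

Lemma cmp_deriv (F G dF dG : R -> R) (a b : R) :
  a <= b ->
  (forall x, a <= x <= b -> is_derive F x (dF x)) ->
  (forall x, a <= x <= b -> is_derive G x (dG x)) ->
  (forall x, a <= x <= b -> dF x <= dG x) ->
  F a <= G a -> F b <= G b.
Proof.
intros Hab HF HG Hd H0.
destruct (MVT_gen (fun x => G x - F x) a b (fun x => dG x - dF x)) as [c [Hc Hm]].
- intros x Hx. rewrite Rmin_left in Hx by lra. rewrite Rmax_right in Hx by lra.
  apply (is_derive_minus (fun x => G x) (fun x => F x)); [apply HG|apply HF]; lra.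
- intros x Hx. rewrite Rmin_left in Hx by lra. rewrite Rmax_right in Hx by lra.
  apply continuity_pt_filterlim.
  apply (ex_derive_continuous (fun x => G x - F x)).
  eexists. apply (is_derive_minus (fun x => G x) (fun x => F x)); [apply HG|apply HF]; lra.
- rewrite Rmin_left in Hc by lra. rewrite Rmax_right in Hc by lra.
  assert (0 <= (dG c - dF c) * (b - a)).
  { apply Rmult_le_pos; [|lra]. specialize (Hd c Hc). lra. }
  lra.
Qed.

Definition hh (y : R) := (1 + y) * ln (1 + y) - y.

Lemma ln1p_lo y : 0 <= y -> y - y^2/2 + y^3/3 - y^4/4 <= ln (1 + y).
Proof.
intros Hy.
apply (cmp_deriv (fun x => x - x^2/2 + x^3/3 - x^4/4) (fun x => ln (1+x))
   (fun x => 1 - x + x^2 - x^3) (fun x => / (1 + x)) 0 y Hy).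
- intros x Hx. auto_derive. auto. simpl. field.
- intros x Hx. auto_derive; [lra|field; lra].
- intros x Hx. apply (Rmult_le_reg_r (1+x)); [lra|].
  rewrite Rinv_l by lra. nra.
- replace (1+0) with 1 by ring. rewrite ln_1. lra.
Qed.

Lemma ln1p_hi y : 0 <= y -> ln (1 + y) <= y - y^2/2 + y^3/3 - y^4/4 + y^5/5.
Proof.
intros Hy.
apply (cmp_deriv (fun x => ln (1+x)) (fun x => x - x^2/2 + x^3/3 - x^4/4 + x^5/5)
   (fun x => / (1 + x)) (fun x => 1 - x + x^2 - x^3 + x^4) 0 y Hy).
- intros x Hx. auto_derive; [lra|field; lra].
- intros x Hx. auto_derive. auto. simpl. field.
- intros x Hx. apply (Rmult_le_reg_r (1+x)); [lra|].
  rewrite Rinv_l by lra. assert (0 <= x^5) by (apply pow_le; lra). nra.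
- replace (1+0) with 1 by ring. rewrite ln_1. lra.
Qed.

Lemma ln1m_lo y : 0 <= y <= 1/2 -> y + y^2/2 + y^3/3 + y^4/4 + y^5/5 <= - ln (1 - y).
Proof.
intros Hy.
apply (cmp_deriv (fun x => x + x^2/2 + x^3/3 + x^4/4 + x^5/5) (fun x => - ln (1-x))
   (fun x => 1 + x + x^2 + x^3 + x^4) (fun x => / (1 - x)) 0 y (proj1 Hy)).
- intros x Hx. auto_derive. auto. simpl. field.
- intros x Hx. auto_derive; [lra|field; lra].
- intros x Hx. apply (Rmult_le_reg_r (1-x)); [lra|].
  rewrite Rinv_l by lra. assert (0 <= x^5) by (apply pow_le; lra). nra.
- replace (1-0) with 1 by ring. rewrite ln_1. lra.
Qed.

Lemma ln1m_hi y : 0 <= y <= 1/2 -> - ln (1 - y) <= y + y^2/2 + y^3/3 + y^4/4 + 2 * y^5/5.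
Proof.
intros Hy.
apply (cmp_deriv (fun x => - ln (1-x)) (fun x => x + x^2/2 + x^3/3 + x^4/4 + 2 * x^5/5)
   (fun x => / (1 - x)) (fun x => 1 + x + x^2 + x^3 + 2 * x^4) 0 y (proj1 Hy)).
- intros x Hx. auto_derive; [lra|field; lra].
- intros x Hx. auto_derive. auto. simpl. field.
- intros x Hx. apply (Rmult_le_reg_r (1-x)); [lra|].
  rewrite Rinv_l by lra. 
  assert (0 <= x^4) by (apply pow_le; lra).
  assert (x^5 <= x^4 / 2) by (replace (x^5) with (x^4 * x) by ring; nra).
  nra.
- replace (1-0) with 1 by ring. rewrite ln_1. lra.
Qed.

Definition Tp (y : R) := y^2/2 - y^3/6 + y^4/12 - y^5/20.

Lemma is_derive_hh x : -1 < x -> is_derive hh x (ln (1 + x)).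
Proof. intros H. unfold hh. auto_derive; [lra|field; lra]. Qed.

Lemma is_derive_hhm x : x < 1 -> is_derive (fun y => hh (- y)) x (- ln (1 - x)).
Proof. intros H. unfold hh. auto_derive; [lra|].
 replace (1 + - x) with (1 - x) by ring. field; lra. Qed.

Lemma hh0 : hh 0 = 0.
Proof. unfold hh. replace (1+0) with 1 by ring. rewrite ln_1. ring. Qed.

Lemma hh_lo y : 0 <= y -> Tp y <= hh y.
Proof.
intros Hy. unfold Tp.
apply (cmp_deriv (fun x => x^2/2 - x^3/6 + x^4/12 - x^5/20) hh
  (fun x => x - x^2/2 + x^3/3 - x^4/4) (fun x => ln (1+x)) 0 y Hy).
- intros x Hx. auto_derive. auto. simpl. field.
- intros x Hx. apply is_derive_hh. lra.
- intros x Hx. apply ln1p_lo. lra.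
- rewrite hh0. lra.
Qed.

Lemma hh_hi y : 0 <= y -> hh y <= Tp y + y^6/30.
Proof.
intros Hy. unfold Tp.
apply (cmp_deriv hh (fun x => x^2/2 - x^3/6 + x^4/12 - x^5/20 + x^6/30)
  (fun x => ln (1+x)) (fun x => x - x^2/2 + x^3/3 - x^4/4 + x^5/5) 0 y Hy).
- intros x Hx. apply is_derive_hh. lra.
- intros x Hx. auto_derive. auto. simpl. field.
- intros x Hx. apply ln1p_hi. lra.
- rewrite hh0. lra.
Qed.

Lemma hhm_lo y : 0 <= y <= 1/2 -> Tp (-y) + y^6/30 <= hh (-y).
Proof.
intros Hy. unfold Tp.
apply (cmp_deriv (fun x => (-x)^2/2 - (-x)^3/6 + (-x)^4/12 - (-x)^5/20 + x^6/30) (fun x => hh (-x))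
  (fun x => x + x^2/2 + x^3/3 + x^4/4 + x^5/5) (fun x => - ln (1-x)) 0 y (proj1 Hy)).
- intros x Hx. auto_derive. auto. simpl. field.
- intros x Hx. apply is_derive_hhm. lra.
- intros x Hx. apply ln1m_lo. lra.
- replace (-0) with 0 by ring. rewrite hh0. lra.
Qed.

Lemma hhm_hi y : 0 <= y <= 1/2 -> hh (-y) <= Tp (-y) + y^6/15.
Proof.
intros Hy. unfold Tp.
apply (cmp_deriv (fun x => hh (-x)) (fun x => (-x)^2/2 - (-x)^3/6 + (-x)^4/12 - (-x)^5/20 + x^6/15)
  (fun x => - ln (1-x)) (fun x => x + x^2/2 + x^3/3 + x^4/4 + 2 * x^5/5) 0 y (proj1 Hy)).
- intros x Hx. apply is_derive_hhm. lra.
- intros x Hx. auto_derive. auto. simpl. field.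
- intros x Hx. apply ln1m_hi. lra.
- replace (-0) with 0 by ring. rewrite hh0. lra.
Qed.

Lemma hh_outer_pos y : 1/2 <= y -> 1/10 <= hh y.
Proof.
intros Hy.
assert (H1 : hh (1/2) <= hh y).
{ apply (cmp_deriv (fun _ => hh (1/2)) hh (fun _ => 0) (fun x => ln (1+x)) (1/2) y Hy).
  - intros x Hx. auto_derive; auto.
  - intros x Hx. apply is_derive_hh. lra.
  - intros x Hx. rewrite <- ln_1. apply ln_le; lra.
  - lra. }
assert (H2 := hh_lo (1/2)). unfold Tp in H2. lra.
Qed.

Lemma hh_outer_neg y : 1/2 <= y < 1 -> 1/10 <= hh (-y).
Proof.
intros Hy.
assert (H1 : hh (-(1/2)) <= hh (-y)).
{ apply (cmp_deriv (fun _ => hh (-(1/2))) (fun x => hh (-x)) (fun _ => 0) (fun x => - ln (1-x)) (1/2) y (proj1 Hy)).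
  - intros x Hx. auto_derive; auto.
  - intros x Hx. apply is_derive_hhm. lra.
  - intros x Hx. assert (ln (1 - x) <= 0). { rewrite <- ln_1. apply ln_le; lra. } lra.
  - lra. }
assert (H2 := hhm_lo (1/2)). unfold Tp in H2. lra.
Qed.

Lemma exRc (f : R -> R) a b : (forall z, Rmin a b <= z <= Rmax a b -> continuous f z) -> ex_RInt f a b.
Proof. intros H. apply (ex_RInt_continuous (V := R_CompleteNormedModule)). exact H. Qed.

Lemma RInt_scalR (f : R -> R) a b l : ex_RInt f a b -> RInt (fun x => l * f x) a b = l * RInt f a b.
Proof. intros H. apply (RInt_scal (V := R_CompleteNormedModule) f a b l H). Qed.

Lemma RInt_plusR (f g : R -> R) a b : ex_RInt f a b -> ex_RInt g a b ->
  RInt (fun x => f x + g x) a b = RInt f a b + RInt g a b.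
Proof. intros H1 H2. apply (RInt_plus (V := R_CompleteNormedModule) f g a b H1 H2). Qed.

Lemma RInt_minusR (f g : R -> R) a b : ex_RInt f a b -> ex_RInt g a b ->
  RInt (fun x => f x - g x) a b = RInt f a b - RInt g a b.
Proof. intros H1 H2. apply (RInt_minus (V := R_CompleteNormedModule) f g a b H1 H2). Qed.

Lemma ex_RInt_plusR (f g : R -> R) a b : ex_RInt f a b -> ex_RInt g a b ->
  ex_RInt (fun x => f x + g x) a b.
Proof. intros H1 H2. apply (ex_RInt_plus (V := R_NormedModule) f g a b H1 H2). Qed.

Lemma ex_RInt_minusR (f g : R -> R) a b : ex_RInt f a b -> ex_RInt g a b ->
  ex_RInt (fun x => f x - g x) a b.
Proof. intros H1 H2. apply (ex_RInt_minus (V := R_NormedModule) f g a b H1 H2). Qed.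

Lemma ex_RInt_scalR (f : R -> R) a b l : ex_RInt f a b -> ex_RInt (fun x => l * f x) a b.
Proof. intros H. apply (ex_RInt_scal (V := R_NormedModule) f a b l H). Qed.

Lemma RInt_ChaslesR (f : R -> R) a b c : ex_RInt f a b -> ex_RInt f b c ->
  RInt f a b + RInt f b c = RInt f a c.
Proof. intros H1 H2. apply (RInt_Chasles (V := R_CompleteNormedModule) f a b c H1 H2). Qed.

Lemma RInt_constR a b (c : R) : RInt (fun _ => c) a b = (b - a) * c.
Proof. apply (RInt_const (V := R_CompleteNormedModule)). Qed.

Lemma RInt_pointR a (f : R -> R) : RInt f a a = 0.
Proof. apply (RInt_point (V := R_CompleteNormedModule)). Qed.

Lemma RInt_extR (f g : R -> R) a b : (forall x, Rmin a b < x < Rmax a b -> f x = g x) -> RInt f a b = RInt g a b.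
Proof. apply (RInt_ext (V := R_CompleteNormedModule)). Qed.

Lemma ex_RInt_extR (f g : R -> R) a b : (forall x, Rmin a b < x < Rmax a b -> f x = g x) -> ex_RInt f a b -> ex_RInt g a b.
Proof. apply (ex_RInt_ext (V := R_NormedModule)). Qed.

Lemma RInt_comp_linR (f : R -> R) (u v a b : R) : ex_RInt f (u * a + v) (u * b + v) ->
  RInt (fun y => u * f (u * y + v)) a b = RInt f (u * a + v) (u * b + v).
Proof. apply (RInt_comp_lin (V := R_CompleteNormedModule)). Qed.

Lemma ex_RInt_comp_linR (f : R -> R) (u v a b : R) : ex_RInt f (u * a + v) (u * b + v) ->
  ex_RInt (fun y => u * f (u * y + v)) a b.
Proof. apply (ex_RInt_comp_lin (V := R_NormedModule)). Qed.

Lemma RInt_derive (f df : R -> R) a b :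
  (forall x, Rmin a b <= x <= Rmax a b -> is_derive f x (df x)) ->
  (forall x, Rmin a b <= x <= Rmax a b -> continuous df x) ->
  RInt df a b = f b - f a.
Proof. intros H1 H2. apply is_RInt_unique. apply (is_RInt_derive (V := R_CompleteNormedModule) f df a b H1 H2). Qed.

Lemma ex_RInt_Chasles1R (f : R -> R) a b c : a <= b <= c -> ex_RInt f a c -> ex_RInt f a b.
Proof. apply (ex_RInt_Chasles_1 (V := R_CompleteNormedModule)). Qed.

Lemma ex_RInt_Chasles2R (f : R -> R) a b c : a <= b <= c -> ex_RInt f a c -> ex_RInt f b c.
Proof. apply (ex_RInt_Chasles_2 (V := R_CompleteNormedModule)). Qed.

Lemma contR (f : R -> R) x : ex_derive f x -> continuous f x.
Proof. apply (ex_derive_continuous (K := R_AbsRing) (V := R_NormedModule)). Qed.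

Ltac fixR := match goal with |- ?x = ?y => change (@eq R x y) end.

Ltac absR := repeat match goal with |- context [@RInt ?V ?f ?a ?b] => let I := fresh "I" in generalize (@RInt V f a b : R); intro I end.
Ltac rfix := absR; try fixR.

Definition gs (y : R) := exp (- (y * y)).
Definition GG (x : R) : R := RInt gs 0 x.
Definition FF (x : R) : R := RInt (fun t => exp (- (x * x) * (1 + t * t)) / (1 + t * t)) 0 1.

Lemma ex_RInt_gs a b : ex_RInt gs a b.
Proof. apply exRc. intros z _. unfold gs. apply contR. auto_derive. auto. Qed.

Lemma is_derive_GG (x : R) : is_derive GG x (gs x).
Proof.
apply (is_derive_RInt (V := R_NormedModule) gs GG 0 x).
- apply filter_forall. intros b. apply (RInt_correct (V := R_CompleteNormedModule)). apply ex_RInt_gs.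
- unfold gs. apply contR. auto_derive. auto.
Qed.

Lemma is_derive_FF (x : R) : is_derive FF x (- 2 * gs x * GG x).
Proof.
unfold FF.
assert (H := is_derive_RInt_param (fun u t => exp (- (u * u) * (1 + t * t)) / (1 + t * t)) 0 1 x).
assert (HD : forall u v, Derive (fun z => exp (- (z * z) * (1 + v * v)) / (1 + v * v)) u
            = -2 * u * exp (- (u * u) * (1 + v * v))).
{ intros u v. apply is_derive_unique. auto_derive.
  - assert (0 <= v*v) by nra. lra.
  - field. assert (0 <= v*v) by nra. lra. }
evar (L : R).
assert (HL : RInt (fun t => Derive (fun u => exp (- (u * u) * (1 + t * t)) / (1 + t * t)) x) 0 1 = L).
{ rewrite (RInt_ext _ (fun t => -2 * x * exp (- (x * x) * (1 + t * t)))).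
  2:{ intros t _. apply HD. }
  rewrite (RInt_extR _ (fun t => (-2 * x * gs x) * (exp (- ((x * t) * (x * t)))))).
  2:{ intros t _. unfold gs. replace (-2 * x * exp (- (x * x)) * exp (- (x * t * (x * t)))) with (-2 * x * (exp (- (x * x)) * exp (- (x * t * (x * t))))) by ring. rewrite <- exp_plus. f_equal. ring_simplify. f_equal. ring. }
  rewrite RInt_scalR.
  2:{ apply exRc. intros z _. apply contR. auto_derive. auto. }
  subst L. reflexivity. }
assert (HG : x * RInt (fun t => exp (- ((x * t) * (x * t)))) 0 1 = GG x).
{ unfold GG.
  assert (E := RInt_comp_linR gs x 0 0 1).
  replace (x * 0 + 0) with 0 in E by ring. replace (x * 1 + 0) with x in E by ring.
  rewrite <- E by apply ex_RInt_gs.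
  rewrite <- RInt_scalR.
  2:{ apply exRc. intros z _. apply contR. auto_derive. auto. }
  apply RInt_extR. intros t _. unfold gs. replace (x * t + 0) with (x * t) by ring. reflexivity. }
replace (- 2 * gs x * GG x) with (RInt (fun t => Derive (fun u => exp (- (u * u) * (1 + t * t)) / (1 + t * t)) x) 0 1).
2:{ rewrite HL. subst L. rewrite <- HG. generalize (RInt (fun x0 : R => exp (- (x * x0 * (x * x0)))) 0 1). intro I. simpl. ring. }
apply H.
- apply filter_forall. intros x0 t _. auto_derive. assert (0 <= t*t) by nra. lra.
- intros t _. eapply continuity_2d_pt_ext.
  { intros u v. symmetry. apply HD. }
  apply continuity_2d_pt_mult.
  + apply continuity_2d_pt_mult. apply continuity_2d_pt_const. apply continuity_2d_pt_id1.
  + apply continuity_1d_2d_pt_comp.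
    * apply derivable_continuous_pt. apply derivable_pt_exp.
    * apply continuity_2d_pt_mult.
      -- apply continuity_2d_pt_opp. apply continuity_2d_pt_mult; apply continuity_2d_pt_id1.
      -- apply continuity_2d_pt_plus. apply continuity_2d_pt_const.
         apply continuity_2d_pt_mult; apply continuity_2d_pt_id2.
- apply filter_forall. intros y. apply exRc. intros z _.
  apply contR. auto_derive. assert (0 <= z*z) by nra. lra.
Qed.

Lemma FF0 : FF 0 = PI / 4.
Proof.
unfold FF. rewrite (RInt_extR _ (fun t => / (1 + t * t))).
2:{ intros t _. replace (- (0 * 0) * (1 + t * t)) with 0 by ring. rewrite exp_0. unfold Rdiv. ring. }
rewrite (RInt_derive atan).
- rewrite atan_1, atan_0. lra.
- intros x _. assert (H := is_derive_atan x). unfold Rsqr in H. exact H.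
- intros x _. apply contR. auto_derive. assert (0 <= x*x) by nra. lra.
Qed.

Lemma GG0 : GG 0 = 0.
Proof. unfold GG. apply RInt_pointR. Qed.

Lemma FF_GG (x : R) : 0 <= x -> FF x + GG x ^ 2 = PI / 4.
Proof.
intros r.
assert (HD : forall y, is_derive (fun z => FF z + GG z ^ 2) y 0).
{ intros y. replace 0 with (plus (-2 * gs y * GG y) (INR 2 * gs y * GG y ^ Init.Nat.pred 2)).
  apply (is_derive_plus (K := R_AbsRing) (V := R_NormedModule)). apply is_derive_FF.
  apply is_derive_pow. apply is_derive_GG.
  simpl. unfold plus; simpl. ring. }
rewrite <- FF0. replace (FF 0) with (FF 0 + GG 0 ^ 2) by (rewrite GG0; ring).
apply Rle_antisym.
+ apply (cmp_deriv (fun z => FF z + GG z ^ 2) (fun _ => FF 0 + GG 0 ^ 2) (fun _ => 0) (fun _ => 0) 0 x r); auto.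
  * intros; auto_derive; auto.
  * intros; lra. * lra.
+ apply (cmp_deriv (fun _ => FF 0 + GG 0 ^ 2) (fun z => FF z + GG z ^ 2) (fun _ => 0) (fun _ => 0) 0 x r); auto.
  * intros; auto_derive; auto.
  * intros; lra. * lra.
Qed.

Lemma FF_bounds (x : R) : 0 <= FF x <= gs x.
Proof.
unfold FF.
assert (Hex : ex_RInt (fun t => exp (- (x * x) * (1 + t * t)) / (1 + t * t)) 0 1).
{ apply exRc. intros z _. apply contR. auto_derive. assert (0 <= z*z) by nra. lra. }
split.
- apply RInt_ge_0; auto. lra. intros t _. apply Rle_mult_inv_pos. apply Rlt_le, exp_pos.
  assert (0 <= t*t) by nra. lra.
- replace (gs x) with (RInt (fun _ => gs x) 0 1) by (rewrite RInt_constR; simpl; ring).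
  apply RInt_le; auto. lra. apply exRc. intros; apply contR; auto_derive; auto.
  intros t Ht. unfold gs. assert (0 <= t*t) by nra.
  apply (Rmult_le_reg_r (1 + t * t)). lra. unfold Rdiv. rewrite Rmult_assoc, Rinv_l by lra.
  rewrite Rmult_1_r.
  replace (- (x * x) * (1 + t * t)) with (- (x * x) + - (x * x * (t * t))) by ring.
  rewrite exp_plus.
  assert (exp (- (x * x * (t * t))) <= 1).
  { rewrite <- exp_0. destruct (Req_dec (x * x * (t * t)) 0) as [E|E].
    rewrite E. replace (-0) with 0 by ring. lra.
    left. apply exp_increasing. assert (0 <= x*x) by nra. assert (0 <= x*x*(t*t)) by nra. lra. }
  assert (0 < exp (- (x * x))) by apply exp_pos.
  assert (0 < exp (- (x * x * (t * t)))) by apply exp_pos. nra.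
Qed.

Lemma GG_ge0 (x : R) : 0 <= x -> 0 <= GG x.
Proof. intros H. unfold GG. apply RInt_ge_0; auto. apply ex_RInt_gs. intros; unfold gs; apply Rlt_le, exp_pos. Qed.

Lemma GG_approx (x : R) : 0 <= x -> Rabs (GG x - sqrt PI / 2) <= 2 / sqrt PI * gs x.
Proof.
intros H.
assert (Hs : 0 < sqrt PI) by (apply sqrt_lt_R0; apply PI_RGT_0).
assert (Hss : sqrt PI * sqrt PI = PI) by (apply sqrt_sqrt; left; apply PI_RGT_0).
assert (E := FF_GG x H). assert (B := FF_bounds x). assert (G0 := GG_ge0 x H).
assert (E2 : (GG x - sqrt PI / 2) * (GG x + sqrt PI / 2) = - FF x).
{ replace ((GG x - sqrt PI / 2) * (GG x + sqrt PI / 2)) with (GG x ^ 2 - (sqrt PI * sqrt PI) / 4) by field.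
  rewrite Hss. lra. }
assert (Rabs (GG x - sqrt PI / 2) * (GG x + sqrt PI / 2) = FF x).
{ rewrite <- (Rabs_right (GG x + sqrt PI / 2)) by lra. rewrite <- Rabs_mult, E2.
  rewrite Rabs_Ropp. apply Rabs_right. lra. }
apply (Rmult_le_reg_r (GG x + sqrt PI / 2)). lra. rewrite H0.
apply Rle_trans with (gs x). lra.
assert (0 < gs x) by (unfold gs; apply exp_pos).
replace (2 / sqrt PI * gs x * (GG x + sqrt PI / 2)) with (gs x + 2 / sqrt PI * gs x * GG x) by (field; lra).
assert (0 <= 2 / sqrt PI * gs x * GG x). { apply Rmult_le_pos; auto. apply Rmult_le_pos; [|lra]. unfold Rdiv. apply Rmult_le_pos. lra. left. apply Rinv_0_lt_compat. auto. }
lra.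
Qed.

Lemma gauss_scaled (a d : R) : 0 < a ->
  RInt (fun y => exp (- a * (y * y))) 0 d = GG (sqrt a * d) / sqrt a.
Proof.
intros Ha. assert (Hs : 0 < sqrt a) by (apply sqrt_lt_R0; auto).
assert (Hss : sqrt a * sqrt a = a) by (apply sqrt_sqrt; lra).
unfold GG. assert (E := RInt_comp_linR gs (sqrt a) 0 0 d).
replace (sqrt a * 0 + 0) with 0 in E by ring. replace (sqrt a * d + 0) with (sqrt a * d) in E by ring.
rewrite <- E by apply ex_RInt_gs. rewrite RInt_scalR.
2:{ apply exRc. intros; apply contR. unfold gs; auto_derive; auto. }
rewrite (RInt_extR (fun y => gs (sqrt a * y + 0)) (fun y => exp (- a * (y * y)))).
2:{ intros y _. unfold gs. f_equal.
replace (- a * (y * y)) with (- ((sqrt a * sqrt a) * (y * y))) by (rewrite Hss; ring). f_equal. ring. }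
rfix. field. lra.
Qed.

Definition uu (x : R) := x * ln x.

Lemma ln_nonpos x : x <= 0 -> ln x = 0.
Proof. intros H. unfold ln. destruct (Rlt_dec 0 x) as [h|h]. exfalso; lra. reflexivity. Qed.

Lemma ln_le_sub1 y : 0 < y -> ln y <= y - 1.
Proof.
intros H. rewrite <- (ln_exp (y - 1)). apply ln_le; auto.
assert (E := exp_ineq1_le (y - 1)). lra.
Qed.

Lemma uu_lo x : 0 < x -> - 2 * sqrt x <= uu x.
Proof.
intros H. unfold uu.
assert (Hs : 0 < sqrt x) by (apply sqrt_lt_R0; auto).
assert (Hss : sqrt x * sqrt x = x) by (apply sqrt_sqrt; lra).
assert (E : ln x = 2 * ln (sqrt x)). { rewrite <- Hss at 1. rewrite ln_mult by auto. ring. }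
assert (E2 := ln_le_sub1 (/ sqrt x) (Rinv_0_lt_compat _ Hs)).
rewrite ln_Rinv in E2 by auto.
rewrite E. replace (x * (2 * ln (sqrt x))) with (2 * (sqrt x * sqrt x * ln (sqrt x))) by (rewrite Hss; ring).
assert (H1 : sqrt x * sqrt x * ln (sqrt x) >= sqrt x * sqrt x * (1 - / sqrt x)).
{ apply Rmult_ge_compat_l; nra. }
replace (sqrt x * sqrt x * (1 - / sqrt x)) with (sqrt x * sqrt x - sqrt x) in H1 by (field; lra).
lra.
Qed.

Lemma uu_hi x : 0 < x <= 1 -> uu x <= 0.
Proof. intros H. unfold uu. assert (ln x <= 0). { rewrite <- ln_1. apply ln_le; lra. } nra. Qed.

Lemma uu_bound x : 0 <= x <= 1 -> Rabs (uu x) <= 1.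
Proof.
intros H. destruct (Req_dec x 0) as [E|E].
- subst. unfold uu. rewrite Rmult_0_l, Rabs_R0. lra.
- assert (uu x <= 0) by (apply uu_hi; lra).
  assert (ln x >= 1 - / x). { assert (HH := ln_le_sub1 (/ x)). rewrite ln_Rinv in HH by lra. 
    assert (0 < / x) by (apply Rinv_0_lt_compat; lra). specialize (HH H1). lra. }
  unfold uu in *. rewrite Rabs_left1 by lra.
  assert (x * ln x >= x * (1 - / x)). { apply Rmult_ge_compat_l; lra. }
  replace (x * (1 - / x)) with (x - 1) in H2 by (field; lra). lra.
Qed.

Lemma uu_cont0 : continuous uu 0.
Proof.
apply continuity_pt_filterlim.
intros eps Heps.
exists (Rmin 1 ((eps / 2) * (eps / 2))). split.
{ apply Rmin_pos. lra. nra. }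
intros x [_ Hx]. simpl in *. unfold R_dist in *.
replace (uu 0) with 0 by (unfold uu; ring).
rewrite Rminus_0_r in *.
destruct (Rle_dec x 0).
- unfold uu. rewrite ln_nonpos by auto. rewrite Rmult_0_r. rewrite Rabs_R0. lra.
- assert (Hx1 : x < 1) by (apply Rlt_le_trans with (1 := (Rle_lt_trans _ _ _ (Rle_abs x) Hx)); apply Rmin_l).
  assert (Hx2 : x < (eps / 2) * (eps / 2)) by (apply Rlt_le_trans with (1 := (Rle_lt_trans _ _ _ (Rle_abs x) Hx)); apply Rmin_r).

  assert (A1 := uu_lo x ltac:(lra)). assert (A2 := uu_hi x ltac:(lra)).
  assert (sqrt x < eps / 2).
  { rewrite <- (sqrt_square (eps/2)) by lra. apply sqrt_lt_1; nra. }
  rewrite Rabs_left1 by lra. lra.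
Qed.

Lemma uu_cont x : 0 <= x -> continuous uu x.
Proof.
intros H. destruct (Req_dec x 0) as [E|E].
- subst. apply uu_cont0.
- apply contR. unfold uu. auto_derive. lra.
Qed.

Lemma cont_upow (a b : nat) x : 0 <= x -> continuous (fun y => uu y ^ a * y ^ b) x.
Proof.
intros H.
apply (continuous_mult (K := R_AbsRing) (fun y => uu y ^ a) (fun y => y ^ b)).
- apply (continuous_comp uu (fun z => z ^ a)). apply uu_cont; auto.
  apply contR. auto_derive. auto.
- apply contR. auto_derive. auto.
Qed.

Lemma is_derive_xq (q : R -> R) : continuous q 0 -> is_derive (fun x => x * q x) 0 (q 0).
Proof.
intros Hq. apply is_derive_Reals.
apply continuity_pt_filterlim in Hq.
intros eps Heps. destruct (Hq eps Heps) as [d [Hd Hq']].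
exists (mkposreal d Hd). intros h Hh Hhd. simpl in *.
replace (((0 + h) * q (0 + h) - 0 * q 0) / h - q 0) with (q h - q 0) by (rewrite Rplus_0_l; field; auto).
unfold R_dist in Hq'. apply Hq'. split. unfold D_x, no_cond. split; auto. simpl. unfold R_dist. rewrite Rminus_0_r. auto.
Qed.

Lemma pow_split x k m : (m <= k)%nat -> x ^ k * ln x ^ m = uu x ^ m * x ^ (k - m).
Proof.
intros H. unfold uu. rewrite Rpow_mult_distr.
replace k with (m + (k - m))%nat at 1 by lia. rewrite pow_add. ring.
Qed.

Lemma cont_kl k m x : (m <= k)%nat -> 0 <= x -> continuous (fun y => y ^ k * ln y ^ m) x.
Proof.
intros H Hx. apply (continuous_ext (fun y => uu y ^ m * y ^ (k - m))).
intros y. rewrite pow_split; auto. apply cont_upow; auto.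
Qed.

Definition Jkm (k m : nat) : R := RInt (fun x => x ^ k * ln x ^ m) 0 1.

Lemma Jkm_ex k m : (m <= k)%nat -> ex_RInt (fun x => x ^ k * ln x ^ m) 0 1.
Proof. intros H. apply exRc. intros z Hz. rewrite Rmin_left, Rmax_right in Hz by lra. apply cont_kl; auto; lra. Qed.

Lemma Jk0 k : Jkm k 0 = / INR (S k).
Proof.
assert (Hn : INR (S k) <> 0) by (apply not_0_INR; lia).
unfold Jkm.
rewrite (RInt_derive (fun x => / INR (S k) * x ^ (S k)) (fun x => x ^ k * ln x ^ 0)).
- rewrite pow1, pow_i by lia. field. auto.
- intros x _. replace (x ^ k * ln x ^ 0) with (/ INR (S k) * (INR (S k) * 1 * x ^ Init.Nat.pred (S k))).
  apply is_derive_scal. apply is_derive_pow. apply (is_derive_id (K := R_AbsRing)).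
  simpl pred. simpl pow at 2. field. auto.
- intros x _. apply (continuous_ext (fun y => y ^ k)). intros; simpl; ring. apply contR; auto_derive; auto.
Qed.

Lemma Jk_step k m : (S m <= k)%nat -> INR (S k) * Jkm k (S m) + INR (S m) * Jkm k m = 0.
Proof.
intros H.
set (F := fun x => x * (uu x ^ S m * x ^ (k - S m))).
set (df := fun x => INR (S k) * (x ^ k * ln x ^ S m) + INR (S m) * (x ^ k * ln x ^ m)).
assert (HF : forall x, F x = x ^ S k * ln x ^ S m).
{ intros x. unfold F. rewrite <- pow_split by lia. simpl. ring. }
assert (E : RInt df 0 1 = F 1 - F 0).
{ apply RInt_derive.
  - intros x Hx. rewrite Rmin_left, Rmax_right in Hx by lra.
    destruct (Req_dec x 0) as [E0|E0].
    + subst x. replace (df 0) with (uu 0 ^ S m * 0 ^ (k - S m)).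
      apply is_derive_xq. apply cont_upow. lra.
      unfold df, uu. rewrite (pow_i k) by lia. simpl. ring.
    + eapply is_derive_ext. intros t; symmetry; apply HF.
      replace (df x) with (plus (mult (INR (S k) * 1 * x ^ Init.Nat.pred (S k)) (ln x ^ S m))
                                (mult (x ^ S k) (INR (S m) * (/ x) * ln x ^ Init.Nat.pred (S m)))).
      apply (is_derive_mult (fun x => x ^ S k) (fun x => ln x ^ S m)).
      apply is_derive_pow. apply (is_derive_id (K := R_AbsRing)).
      apply is_derive_pow. apply is_derive_ln. lra.
      intros; apply Rmult_comm.
      unfold df, plus, mult; simpl. field. lra.
  - intros x Hx. rewrite Rmin_left, Rmax_right in Hx by lra.
    apply (continuous_plus (V := R_NormedModule) (fun x => INR (S k) * (x ^ k * ln x ^ S m)) (fun x => INR (S m) * (x ^ k * ln x ^ m))).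
    apply (continuous_scal_r (K := R_AbsRing) (V := R_NormedModule) (INR (S k)) (fun x => x ^ k * ln x ^ S m)). apply cont_kl; lia || lra.
    apply (continuous_scal_r (K := R_AbsRing) (V := R_NormedModule) (INR (S m)) (fun x => x ^ k * ln x ^ m)). apply cont_kl; lia || lra. }
unfold df in E. rewrite RInt_plusR in E.
2:{ apply ex_RInt_scalR. apply Jkm_ex. lia. }
2:{ apply ex_RInt_scalR. apply Jkm_ex. lia. }
rewrite !RInt_scalR in E by (apply Jkm_ex; lia).
unfold Jkm. rewrite E. rewrite !HF. rewrite ln_1. rewrite !pow_i by lia. ring.
Qed.

Lemma Jkm_val k m : (m <= k)%nat -> Jkm k m = (-1) ^ m * INR (fact m) / INR (S k) ^ (S m).
Proof.
induction m; intros H.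
- rewrite Jk0. rewrite pow_O, pow_1. replace (INR (fact 0)) with 1 by reflexivity. field. apply not_0_INR; lia.
- assert (E := Jk_step k m H). rewrite IHm in E by lia.
  assert (Hn : INR (S k) <> 0) by (apply not_0_INR; lia).
  apply (Rmult_eq_reg_l (INR (S k))); auto.
  replace (INR (S k) * Jkm k (S m)) with (- (INR (S m) * ((-1) ^ m * INR (fact m) / INR (S k) ^ S m))) by lra.
  rewrite fact_simpl, mult_INR. rewrite <- !tech_pow_Rmult. field. split; auto. apply pow_nonzero. auto.
Qed.

Lemma Derive_n_exp n x : Derive_n exp n x = exp x.
Proof.
revert x. induction n; intros x. reflexivity.
simpl. rewrite (Derive_ext _ exp) by auto. apply is_derive_unique. auto_derive; auto. ring.
Qed.

Lemma ex_derive_n_exp n x : ex_derive_n exp n x.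
Proof.
destruct n. simpl; auto. simpl. apply (ex_derive_ext exp). intros; symmetry; apply Derive_n_exp.
auto_derive; auto.
Qed.

Lemma Derive_n_expm n x : Derive_n (fun s => exp (- s)) n x = (-1) ^ n * exp (- x).
Proof.
revert x. induction n; intros x. simpl; ring.
simpl. rewrite (Derive_ext _ (fun s => (-1) ^ n * exp (- s))) by auto. apply is_derive_unique. auto_derive; auto. ring.
Qed.

Lemma ex_derive_n_expm n x : ex_derive_n (fun s => exp (- s)) n x.
Proof.
destruct n. simpl; auto. simpl. apply (ex_derive_ext (fun s => (-1) ^ n * exp (- s))). intros; symmetry; apply Derive_n_expm.
auto_derive; auto.
Qed.

Lemma sum_zero_pow N : sum_f_R0 (fun k => 0 ^ k / INR (fact k)) N = 1.
Proof. induction N. simpl. field. simpl sum_f_R0. rewrite IHN. simpl pow. unfold Rdiv. ring. Qed.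

Lemma exp_taylor v N : Rabs (exp v - sum_f_R0 (fun k => v ^ k / INR (fact k)) N)
   <= exp (Rabs v) * Rabs v ^ (S N) / INR (fact (S N)).
Proof.
assert (Hf : 0 < INR (fact (S N))) by apply INR_fact_lt_0.
destruct (Rtotal_order v 0) as [Hv|[Hv|Hv]].
- destruct (Taylor_Lagrange (fun s => exp (- s)) N 0 (- v) ltac:(lra)) as [z [Hz E]].
  { intros; apply ex_derive_n_expm. }
  rewrite Ropp_involutive in E. rewrite E.
  rewrite (sum_eq _ (fun k => v ^ k / INR (fact k))).
  2:{ intros i _. rewrite Derive_n_expm, Ropp_0, exp_0, Rminus_0_r.
      replace (- v) with (-1 * v) by ring. rewrite Rpow_mult_distr.
      replace (v ^ i / INR (fact i)) with (((-1 * -1) ^ i) * v ^ i / INR (fact i)) by (replace (-1 * -1) with 1 by ring; rewrite pow1; field; apply INR_fact_neq_0).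
      rewrite Rpow_mult_distr. field. apply INR_fact_neq_0. }
  rewrite Derive_n_expm. rewrite Rminus_0_r.
  replace (sum_f_R0 (fun k => v ^ k / INR (fact k)) N + (- v) ^ S N / INR (fact (S N)) * ((-1) ^ S N * exp (- z)) -
     sum_f_R0 (fun k => v ^ k / INR (fact k)) N) with ((- v) ^ S N / INR (fact (S N)) * ((-1) ^ S N * exp (- z))) by ring.
  assert (exp (- z) <= exp (Rabs v)). { left. apply exp_increasing. rewrite Rabs_left; lra. }
  assert (0 < exp (- z)) by apply exp_pos.
  assert (0 <= Rabs v ^ S N) by (apply pow_le; apply Rabs_pos).
  unfold Rdiv. rewrite !Rabs_mult, <- !RPow_abs, Rabs_Ropp, Rabs_m1, pow1, Rabs_inv.
  rewrite (Rabs_right (INR _)) by lra. rewrite (Rabs_right (exp _)) by lra.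
  assert (0 < / INR (fact (S N))) by (apply Rinv_0_lt_compat; auto).
  rewrite Rmult_1_l. 
  apply Rle_trans with (Rabs v ^ S N * / INR (fact (S N)) * exp (Rabs v)).
  + apply Rmult_le_compat_l; auto. apply Rmult_le_pos; lra.
  + right. ring.
- subst v. rewrite sum_zero_pow, exp_0. rewrite Rminus_diag, Rabs_R0.
  rewrite pow_i by lia. unfold Rdiv. rewrite Rmult_0_r, Rmult_0_l. lra.
- destruct (Taylor_Lagrange exp N 0 v Hv) as [z [Hz E]].
  { intros; apply ex_derive_n_exp. }
  rewrite E.
  rewrite (sum_eq _ (fun k => v ^ k / INR (fact k))).
  2:{ intros i _. rewrite Derive_n_exp. rewrite exp_0. rewrite Rminus_0_r. field. apply INR_fact_neq_0. }
  rewrite Derive_n_exp, Rminus_0_r.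
  replace (sum_f_R0 (fun k => v ^ k / INR (fact k)) N + v ^ S N / INR (fact (S N)) * exp z -
     sum_f_R0 (fun k => v ^ k / INR (fact k)) N) with (v ^ S N / INR (fact (S N)) * exp z) by ring.
  rewrite (Rabs_right v) by lra.
  assert (exp z <= exp v). { left. apply exp_increasing. lra. }
  assert (0 <= v ^ S N) by (apply pow_le; lra).
  rewrite Rabs_right.
  2:{ apply Rle_ge. apply Rmult_le_pos. apply Rmult_le_pos; auto. left; apply Rinv_0_lt_compat; auto. left; apply exp_pos. }
  unfold Rdiv.
  apply Rle_trans with (v ^ S N * / INR (fact (S N)) * exp v).
  + apply Rmult_le_compat_l; auto. apply Rmult_le_pos; auto. left; apply Rinv_0_lt_compat; auto.
  + right. ring.
Qed.

Lemma cont_term t k x : 0 <= x -> continuous (fun y => (- t * uu y) ^ k / INR (fact k)) x.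
Proof.
intros H.
apply (continuous_comp uu (fun z => (- t * z) ^ k / INR (fact k))). apply uu_cont; auto.
apply contR. auto_derive. auto.
Qed.

Definition SN t N x := sum_f_R0 (fun k => (- t * uu x) ^ k / INR (fact k)) N.

Lemma coef_val t k : RInt (fun x => (- t * uu x) ^ k / INR (fact k)) 0 1 = t ^ k / INR (S k) ^ (S k).
Proof.
rewrite (RInt_extR _ (fun x => (t ^ k * (-1) ^ k / INR (fact k)) * (x ^ k * ln x ^ k))).
2:{ intros x _. rewrite pow_split by lia. rewrite Nat.sub_diag. 
    replace (- t * uu x) with ((-1) * t * uu x) by ring. rewrite !Rpow_mult_distr. simpl pow at 4. field. apply INR_fact_neq_0. }
rewrite RInt_scalR by (apply Jkm_ex; lia). fold (Jkm k k). rewrite Jkm_val by lia. fixR.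
assert (INR (S k) <> 0) by (apply not_0_INR; lia).
replace (t ^ k * (-1) ^ k / INR (fact k) * ((-1) ^ k * INR (fact k) / INR (S k) ^ S k)) with
  (t ^ k * ((-1) * (-1)) ^ k / INR (S k) ^ S k).
replace ((-1) * (-1)) with 1 by ring. rewrite pow1. field. apply pow_nonzero; auto.
rewrite Rpow_mult_distr. field. split. apply pow_nonzero; auto. apply INR_fact_neq_0.
Qed.

Lemma SN_int t N : ex_RInt (SN t N) 0 1 /\
  RInt (SN t N) 0 1 = sum_f_R0 (fun k => t ^ k / INR (S k) ^ (S k)) N.
Proof.
induction N.
- unfold SN. simpl sum_f_R0. split.
  + apply exRc. intros z Hz. rewrite Rmin_left, Rmax_right in Hz by lra. apply (cont_term t 0). lra.
  + apply (coef_val t 0).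
- destruct IHN as [H1 H2].
  assert (H3 : ex_RInt (fun x => (- t * uu x) ^ S N / INR (fact (S N))) 0 1).
  { apply exRc. intros z Hz. rewrite Rmin_left, Rmax_right in Hz by lra. apply cont_term. lra. }
  change (SN t (S N)) with (fun x => SN t N x + (- t * uu x) ^ S N / INR (fact (S N))).
  change (sum_f_R0 (fun k => t ^ k / INR (S k) ^ S k) (S N)) with
    (sum_f_R0 (fun k => t ^ k / INR (S k) ^ S k) N + t ^ S N / INR (S (S N)) ^ S (S N)).
  split.
  + apply (ex_RInt_plusR (SN t N)); auto.
  + rewrite (RInt_plusR (SN t N)) by auto. rewrite H2, coef_val. reflexivity.
Qed.

Lemma integrand_ex t : ex_RInt (integrand t) 0 1.
Proof.
apply exRc. intros z Hz. rewrite Rmin_left, Rmax_right in Hz by lra.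
apply (continuous_ext (fun y => exp (- t * uu y))). intros y. unfold integrand, uu. f_equal. ring.
apply (continuous_comp uu (fun w => exp (- t * w))). apply uu_cont. lra.
apply contR. auto_derive. auto.
Qed.

Lemma part1_aux t : is_series (fun k => t ^ k / INR (S k) ^ (S k)) (RInt (integrand t) 0 1).
Proof.
apply is_series_Reals. intros eps Heps.
set (B := exp (Rabs t)).
assert (HB : 0 < B) by apply exp_pos.
destruct (cv_speed_pow_fact (Rabs t) (eps / 2 / B)) as [N0 HN0].
{ apply Rlt_gt. apply Rdiv_lt_0_compat; lra. }
exists N0. intros n Hn.
destruct (SN_int t n) as [H1 H2]. rewrite <- H2.
unfold Rdist. rewrite Rabs_minus_sym.
rewrite <- RInt_minusR by (auto; apply integrand_ex).
apply Rle_lt_trans with ((1 - 0) * (B * (Rabs t ^ S n / INR (fact (S n))))).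
- apply abs_RInt_le_const. lra. apply ex_RInt_minusR; auto. apply integrand_ex.
  intros x Hx. unfold integrand, SN.
  replace (- t * x * ln x) with (- t * uu x) by (unfold uu; ring).
  eapply Rle_trans. apply exp_taylor.
  assert (Hu := uu_bound x Hx).
  assert (Hv : Rabs (- t * uu x) <= Rabs t).
  { rewrite Rabs_mult, Rabs_Ropp. rewrite <- (Rmult_1_r (Rabs t)) at 2. apply Rmult_le_compat_l; auto. apply Rabs_pos. }
  unfold B. unfold Rdiv. rewrite Rmult_assoc.
  assert (0 < / INR (fact (S n))) by (apply Rinv_0_lt_compat; apply INR_fact_lt_0).
  apply Rmult_le_compat. left; apply exp_pos. apply Rmult_le_pos. apply pow_le, Rabs_pos. lra.
  destruct (Req_dec (Rabs (- t * uu x)) (Rabs t)) as [E|E]. rewrite E; lra. left. apply exp_increasing. lra.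
  apply Rmult_le_compat_r. lra. apply pow_incr. split; auto. apply Rabs_pos.
- assert (HS : (S n >= N0)%nat) by lia. specialize (HN0 (S n) HS).
  unfold Rdist in HN0. rewrite Rminus_0_r in HN0.
  assert (Rabs t ^ S n / INR (fact (S n)) < eps / 2 / B).
  { eapply Rle_lt_trans. apply Rle_abs. auto. }
  replace (1 - 0) with 1 by ring. rewrite Rmult_1_l.
  apply Rlt_le_trans with (B * (eps / 2 / B)). apply Rmult_lt_compat_l; auto.
  replace (B * (eps / 2 / B)) with (eps / 2) by (field; lra). lra.
Qed.

Lemma part1 t : is_series (fterm t) (t * RInt (integrand t) 0 1).
Proof.
apply (is_series_ext (fun k => scal t (t ^ k / INR (S k) ^ (S k)))).
- intros n. unfold fterm, scal; simpl; unfold mult; simpl. unfold Rdiv. ring.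
- apply (is_series_scal_l (K := R_AbsRing) (V := R_NormedModule)). apply part1_aux.
Qed.

Lemma sum_ge_last (f : nat -> R) n : (forall k, 0 <= f k) -> f n <= sum_f_R0 f n.
Proof.
intros H. destruct n. simpl. lra. simpl. assert (0 <= sum_f_R0 f n). apply cond_pos_sum. auto. lra.
Qed.

Lemma pow_exp_bound j x : 0 <= x -> x ^ j <= INR (fact j) * exp x.
Proof.
intros Hx. assert (Hf : 0 < INR (fact j)) by apply INR_fact_lt_0.
assert (H := exp_ge_taylor x j Hx).
assert (H2 := sum_ge_last (fun k => x ^ k / INR (fact k)) j).
assert (x ^ j / INR (fact j) <= exp x).
{ eapply Rle_trans; [apply H2|exact H]. intros k. apply Rle_mult_inv_pos. apply pow_le; auto. apply INR_fact_lt_0. }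
apply (Rmult_le_reg_r (/ INR (fact j))). apply Rinv_0_lt_compat; auto.
replace (INR (fact j) * exp x * / INR (fact j)) with (exp x) by (field; lra). exact H0.
Qed.

Lemma polyexp j c : 0 < c -> exists C, forall L, 1 <= L -> L ^ j * exp (- (c * L)) <= C / L ^ 2.
Proof.
intros Hc. exists (INR (fact (j + 2)) / c ^ (j + 2)). intros L HL.
assert (Hcj : 0 < c ^ (j + 2)) by (apply pow_lt; auto).
assert (H := pow_exp_bound (j + 2) (c * L) ltac:(nra)).
rewrite Rpow_mult_distr in H.
assert (HL2 : 0 < L ^ 2) by (apply pow_lt; lra).
assert (He : 0 < exp (c * L)) by apply exp_pos.
rewrite exp_Ropp.
apply (Rmult_le_reg_r (L ^ 2 * exp (c * L) * c ^ (j + 2))). 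
{ apply Rmult_lt_0_compat; auto. apply Rmult_lt_0_compat; auto. }
replace (L ^ j * / exp (c * L) * (L ^ 2 * exp (c * L) * c ^ (j + 2))) with (c ^ (j + 2) * L ^ (j + 2)).
2:{ rewrite !pow_add. field. lra. }
replace (INR (fact (j + 2)) / c ^ (j + 2) / L ^ 2 * (L ^ 2 * exp (c * L) * c ^ (j + 2))) with (INR (fact (j + 2)) * exp (c * L)).
2:{ field. lra. }
exact H.
Qed.

Lemma expm_bounds z : 0 <= z -> 0 <= exp (- z) - 1 + z <= z ^ 2 / 2.
Proof.
intros Hz. split.
- assert (H := exp_ineq1_le (- z)). lra.
- assert (H : exp (- z) - 1 + z <= z ^ 2 / 2).
  { apply (cmp_deriv (fun x => exp (- x) - 1 + x) (fun x => x ^ 2 / 2) (fun x => 1 - exp (- x)) (fun x => x) 0 z Hz).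
    - intros x _. auto_derive; auto. ring.
    - intros x _. auto_derive; auto. field.
    - intros x Hx. assert (H := exp_ineq1_le (- x)). lra.
    - rewrite Ropp_0, exp_0. lra. }
  exact H.
Qed.

Lemma exp_taylor3 v : Rabs (exp v - (1 + v + v ^ 2 / 2 + v ^ 3 / 6)) <= exp (Rabs v) * v ^ 4 / 24.
Proof.
assert (H := exp_taylor v 3).
replace (sum_f_R0 (fun k => v ^ k / INR (fact k)) 3) with (1 + v + v ^ 2 / 2 + v ^ 3 / 6) in H.
2:{ simpl. field. }
replace (Rabs v ^ S 3) with (v ^ 4) in H.
2:{ rewrite RPow_abs. rewrite Rabs_right. reflexivity. apply Rle_ge. replace (v ^ 4) with ((v ^ 2) ^ 2) by ring. apply pow2_ge_0. }
replace (INR (fact (S 3))) with 24 in H. exact H.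
simpl. ring.
Qed.

Definition phi L y := exp (- L * hh y).
Definition gL L y := exp (- (L / 2) * (y * y)).
Definition mainf L y := 2 * gL L y * (1 - L * y ^ 4 / 12 + L ^ 2 * y ^ 6 / 72).
Definition Kpt := 5 * (1 + 6 ^ 6 * 720).

Lemma Rabs_le_between x b : - b <= x <= b -> Rabs x <= b.
Proof. intros H. apply Rabs_le. lra. Qed.

Lemma pointwise_X L y Z R2 v :
  1 <= L -> 0 <= y <= 1/2 ->
  Rabs (Z - L * y ^ 4 / 12) <= L * y ^ 6 / 20 ->
  0 <= Z <= L * y ^ 4 / 6 ->
  0 <= R2 <= L ^ 2 * y ^ 8 / 72 ->
  Rabs (v ^ 2 - L ^ 2 * y ^ 6 / 36) <= L ^ 2 * y ^ 8 / 25 ->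
  v ^ 2 <= L ^ 2 * y ^ 6 / 16 ->
  Rabs ((1 - Z + R2) * (2 + v ^ 2) - 2 * (1 - L * y ^ 4 / 12 + L ^ 2 * y ^ 6 / 72))
   <= L * y ^ 6 / 10 + L ^ 2 * y ^ 8 / 14 + L ^ 3 * y ^ 10 / 96 + L ^ 4 * y ^ 14 / 1152.
Proof.
intros HL Hy H1 H2 H3 H4 H5.
replace ((1 - Z + R2) * (2 + v ^ 2) - 2 * (1 - L * y ^ 4 / 12 + L ^ 2 * y ^ 6 / 72))
  with (2 * (- (Z - L * y ^ 4 / 12)) + 2 * R2 + (v ^ 2 - L ^ 2 * y ^ 6 / 36) + (R2 - Z) * v ^ 2) by field.
assert (Hv2 : 0 <= v ^ 2) by apply pow2_ge_0.
assert (HT : Rabs ((R2 - Z) * v ^ 2) <= (L * y ^ 4 / 6 + L ^ 2 * y ^ 8 / 72) * (L ^ 2 * y ^ 6 / 16)).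
{ rewrite Rabs_mult. rewrite (Rabs_right (v ^ 2)) by lra.
  apply Rmult_le_compat; auto. apply Rabs_pos. apply Rabs_le_between. lra. }
replace (L ^ 3 * y ^ 10 / 96 + L ^ 4 * y ^ 14 / 1152) with ((L * y ^ 4 / 6 + L ^ 2 * y ^ 8 / 72) * (L ^ 2 * y ^ 6 / 16)) by field.
assert (Hy8 : 0 <= L ^ 2 * y ^ 8) by (apply Rmult_le_pos; apply pow_le; lra).
assert (HA := Rabs_triang (2 * - (Z - L * y ^ 4 / 12) + 2 * R2 + (v ^ 2 - L ^ 2 * y ^ 6 / 36)) ((R2 - Z) * v ^ 2)).
assert (HB := Rabs_triang (2 * - (Z - L * y ^ 4 / 12) + 2 * R2) (v ^ 2 - L ^ 2 * y ^ 6 / 36)).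
assert (HC := Rabs_triang (2 * - (Z - L * y ^ 4 / 12)) (2 * R2)).
rewrite Rabs_mult, Rabs_Ropp, (Rabs_right 2) in HC by lra.
rewrite (Rabs_mult 2 R2), (Rabs_right 2), (Rabs_right R2) in HC by lra.
lra.
Qed.

Lemma pointwise_raw L y : 1 <= L -> 0 <= y <= 1/2 ->
  Rabs (phi L y + phi L (- y) - mainf L y) <=
  exp (- (L / 3) * (y * y)) * (L * y ^ 6 / 10 + L ^ 2 * y ^ 8 / 14 + L ^ 3 * y ^ 10 / 96 + L ^ 4 * y ^ 14 / 1152
      + L ^ 4 * y ^ 12 / 3072).
Proof.
intros HL Hy.
assert (Ha1 := hh_lo y (proj1 Hy)). assert (Ha2 := hh_hi y (proj1 Hy)).
assert (Hb1 := hhm_lo y Hy). assert (Hb2 := hhm_hi y Hy).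
unfold Tp in *.
replace ((-y)^2) with (y^2) in * by ring. replace ((-y)^3) with (-y^3) in * by ring.
replace ((-y)^4) with (y^4) in * by ring. replace ((-y)^5) with (-y^5) in * by ring.
set (a := hh y) in *. set (b := hh (- y)) in *.
set (E := (a + b) / 2). set (O := (a - b) / 2).
set (v := L * O). set (Z := L * (E - y ^ 2 / 2)).
assert (Hy2 : y ^ 2 <= 1/4) by nra.
assert (Hp : forall n, 0 <= y ^ n) by (intros; apply pow_le; lra).
assert (HO1 : - y ^ 3 / 6 - y ^ 5 / 20 - y ^ 6 / 30 <= O <= - y ^ 3 / 6 - y ^ 5 / 20).
{ unfold O. split; lra. }
assert (HZ1 : L * y ^ 4 / 12 + L * y ^ 6 / 60 <= Z <= L * y ^ 4 / 12 + L * y ^ 6 / 20).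
{ assert (y ^ 4 / 12 + y ^ 6 / 60 <= E - y ^ 2 / 2 <= y ^ 4 / 12 + y ^ 6 / 20) by (unfold E; split; lra).
  unfold Z. split. replace (L * y ^ 4 / 12 + L * y ^ 6 / 60) with (L * (y ^ 4 / 12 + y ^ 6 / 60)) by field.
  apply Rmult_le_compat_l; lra.
  replace (L * y ^ 4 / 12 + L * y ^ 6 / 20) with (L * (y ^ 4 / 12 + y ^ 6 / 20)) by field.
  apply Rmult_le_compat_l; lra. }
assert (H64 : y ^ 6 <= y ^ 4 / 4) by (replace (y ^ 6) with (y ^ 4 * y ^ 2) by ring; pose proof (Hp 4%nat); nra).
assert (H53 : y ^ 5 <= y ^ 3 / 4) by (replace (y ^ 5) with (y ^ 3 * y ^ 2) by ring; pose proof (Hp 3%nat); nra).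
assert (H65 : y ^ 6 <= y ^ 5 / 2) by (replace (y ^ 6) with (y ^ 5 * y) by ring; pose proof (Hp 5%nat); nra).
assert (HOle : O <= 0) by (pose proof (Hp 3%nat); pose proof (Hp 5%nat); lra).
assert (HOabs : Rabs (O + y ^ 3 / 6) <= y ^ 5 / 10) by (apply Rabs_le_between; lra).
assert (HO4 : - O <= y ^ 3 / 4) by lra.
assert (F1 : Rabs (Z - L * y ^ 4 / 12) <= L * y ^ 6 / 20).
{ apply Rabs_le_between. split; [|lra]. assert (0 <= L * y ^ 6) by (apply Rmult_le_pos; lra || auto). lra. }
assert (F2 : 0 <= Z <= L * y ^ 4 / 6).
{ assert (0 <= L * y ^ 4) by (apply Rmult_le_pos; lra || auto). assert (0 <= L * y ^ 6) by (apply Rmult_le_pos; lra || auto).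
  assert (L * y ^ 6 <= L * (y ^ 4 / 4)) by (apply Rmult_le_compat_l; lra). lra. }
set (R2 := exp (- Z) - 1 + Z).
assert (HR2 := expm_bounds Z (proj1 F2)). fold R2 in HR2.
assert (F3 : 0 <= R2 <= L ^ 2 * y ^ 8 / 72).
{ split. lra. apply Rle_trans with (Z ^ 2 / 2). lra.
  replace (L ^ 2 * y ^ 8 / 72) with ((L * y ^ 4 / 6) ^ 2 / 2) by field.
  assert (Z ^ 2 <= (L * y ^ 4 / 6) ^ 2) by (apply pow_incr; lra). lra. }
assert (F5 : Rabs (v ^ 2 - L ^ 2 * y ^ 6 / 36) <= L ^ 2 * y ^ 8 / 25).
{ replace (v ^ 2 - L ^ 2 * y ^ 6 / 36) with (L ^ 2 * ((O + y ^ 3 / 6) * (O - y ^ 3 / 6))) by (unfold v; field).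
  rewrite Rabs_mult, (Rabs_right (L ^ 2)) by (apply Rle_ge, pow_le; lra).
  replace (L ^ 2 * y ^ 8 / 25) with (L ^ 2 * (y ^ 8 / 25)) by field.
  apply Rmult_le_compat_l. apply pow_le; lra.
  rewrite Rabs_mult.
  assert (Rabs (O - y ^ 3 / 6) <= y ^ 3 / 3 + y ^ 5 / 10) by (apply Rabs_le_between; lra).
  apply Rle_trans with (y ^ 5 / 10 * (y ^ 3 / 3 + y ^ 5 / 10)).
  apply Rmult_le_compat; auto; apply Rabs_pos.
  replace (y ^ 5 / 10 * (y ^ 3 / 3 + y ^ 5 / 10)) with (y ^ 8 / 30 + y ^ 5 * y ^ 5 / 100) by field.
  assert (y ^ 5 * y ^ 5 <= y ^ 5 * (y ^ 3 / 4)) by (apply Rmult_le_compat_l; auto).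
  replace (y ^ 5 * (y ^ 3 / 4)) with (y ^ 8 / 4) in H by field. pose proof (Hp 8%nat). lra. }
assert (F6 : v ^ 2 <= L ^ 2 * y ^ 6 / 16).
{ replace (v ^ 2) with (L ^ 2 * (- O) ^ 2) by (unfold v; ring).
  replace (L ^ 2 * y ^ 6 / 16) with (L ^ 2 * (y ^ 3 / 4) ^ 2) by field.
  apply Rmult_le_compat_l. apply pow_le; lra. apply pow_incr. lra. }
assert (HX := pointwise_X L y Z R2 v HL Hy F1 F2 F3 F5 F6).
set (G := gL L y).
assert (EE : exp (- L * E) = G * (1 - Z + R2)).
{ unfold R2. replace (1 - Z + (exp (- Z) - 1 + Z)) with (exp (- Z)) by ring.
  unfold G, gL. rewrite <- exp_plus. f_equal. unfold Z. field. }
assert (Ephi1 : phi L y = exp (- L * E) * exp (- v)).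
{ unfold phi. rewrite <- exp_plus. f_equal. fold a. unfold v, E, O. field. }
assert (Ephi2 : phi L (- y) = exp (- L * E) * exp v).
{ unfold phi. rewrite <- exp_plus. f_equal. fold b. unfold v, E, O. field. }
set (R4 := exp v + exp (- v) - 2 - v ^ 2).
assert (HR4 : Rabs R4 <= exp (- v) * v ^ 4 / 12).
{ assert (T1 := exp_taylor3 v). assert (T2 := exp_taylor3 (- v)).
  rewrite Rabs_Ropp in T2. replace ((- v) ^ 4) with (v ^ 4) in T2 by ring.
  assert (Hv0 : v <= 0) by (unfold v; assert (0 <= L * (- O)) by (apply Rmult_le_pos; lra); lra).
  rewrite (Rabs_left1 v Hv0) in T1, T2.
  replace R4 with ((exp v - (1 + v + v ^ 2 / 2 + v ^ 3 / 6)) + (exp (- v) - (1 + - v + (- v) ^ 2 / 2 + (- v) ^ 3 / 6))) by (unfold R4; field).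
  eapply Rle_trans. apply Rabs_triang. lra. }
assert (Ediff : phi L y + phi L (- y) - mainf L y =
   G * ((1 - Z + R2) * (2 + v ^ 2) - 2 * (1 - L * y ^ 4 / 12 + L ^ 2 * y ^ 6 / 72)) + exp (- L * E) * R4).
{ rewrite Ephi1, Ephi2. unfold mainf. fold G. rewrite EE. unfold R4. ring. }
rewrite Ediff.
assert (HG : 0 < G) by (unfold G, gL; apply exp_pos).
assert (Hcmp : G <= exp (- (L / 3) * (y * y))).
{ unfold G, gL. destruct (Req_dec y 0) as [E0|E0]. subst y. right. f_equal. ring.
  left. apply exp_increasing. assert (0 < y * y) by nra. nra. }
assert (Hphi : exp (- L * E) * exp (- v) <= exp (- (L / 3) * (y * y))).
{ rewrite <- Ephi1. unfold phi. fold a.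
  assert (a >= y ^ 2 / 3). { pose proof (Hp 3%nat). pose proof (Hp 4%nat). nra. }
  destruct (Req_dec y 0) as [E0|E0]. subst y. replace (- L * a) with (- L * a) by ring.
  apply Rle_trans with (exp 0). destruct (Req_dec a 0) as [Ea|Ea]. rewrite Ea. right. f_equal. ring.
  left. apply exp_increasing. assert (0 <= a) by (simpl in *; lra). nra. right. f_equal. ring.
  left. apply exp_increasing. replace (y * y) with (y ^ 2) by ring. nra. }
assert (Hv4 : v ^ 4 <= L ^ 4 * y ^ 12 / 256).
{ replace (v ^ 4) with ((v ^ 2) ^ 2) by ring. replace (L ^ 4 * y ^ 12 / 256) with ((L ^ 2 * y ^ 6 / 16) ^ 2) by field.
  apply pow_incr. split. apply pow2_ge_0. auto. }
eapply Rle_trans. apply Rabs_triang.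
rewrite Rabs_mult, (Rabs_right G) by lra.
rewrite Rabs_mult, (Rabs_right (exp (- L * E))) by (left; apply exp_pos).
assert (HB1 : 0 <= L * y ^ 6 / 10 + L ^ 2 * y ^ 8 / 14 + L ^ 3 * y ^ 10 / 96 + L ^ 4 * y ^ 14 / 1152).
{ eapply Rle_trans. apply Rabs_pos. apply HX. }
assert (T1 : G * Rabs ((1 - Z + R2) * (2 + v ^ 2) - 2 * (1 - L * y ^ 4 / 12 + L ^ 2 * y ^ 6 / 72)) <=
   exp (- (L / 3) * (y * y)) * (L * y ^ 6 / 10 + L ^ 2 * y ^ 8 / 14 + L ^ 3 * y ^ 10 / 96 + L ^ 4 * y ^ 14 / 1152)).
{ apply Rmult_le_compat; auto. lra. apply Rabs_pos. }
assert (T2 : exp (- L * E) * Rabs R4 <= exp (- (L / 3) * (y * y)) * (L ^ 4 * y ^ 12 / 3072)).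
{ apply Rle_trans with (exp (- L * E) * (exp (- v) * v ^ 4 / 12)).
  apply Rmult_le_compat_l. left; apply exp_pos. auto.
  replace (exp (- L * E) * (exp (- v) * v ^ 4 / 12)) with ((exp (- L * E) * exp (- v)) * (v ^ 4 / 12)) by field.
  replace (L ^ 4 * y ^ 12 / 3072) with ((L ^ 4 * y ^ 12 / 256) / 12) by field.
  apply Rmult_le_compat; auto. apply Rmult_le_pos; left; apply exp_pos.
  replace (v ^ 4) with ((v ^ 2) ^ 2) by ring. assert (0 <= (v ^ 2) ^ 2) by apply pow2_ge_0. lra. lra. }
lra.
Qed.

Lemma wpow_le j w : (j <= 6)%nat -> 0 <= w -> w ^ j <= 1 + w ^ 6.
Proof.
intros Hj Hw. destruct (Rle_dec w 1).
- assert (w ^ j <= 1). { rewrite <- (pow1 j). apply pow_incr. lra. }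
  assert (0 <= w ^ 6) by (apply pow_le; lra). lra.
- assert (w ^ j <= w ^ 6) by (apply Rle_pow; lra || lia). lra.
Qed.

Lemma pointwise L y : 1 <= L -> 0 <= y <= 1/2 ->
  Rabs (phi L y + phi L (- y) - mainf L y) <= Kpt / L ^ 2 * exp (- (L / 6) * (y * y)).
Proof.
intros HL Hy.
eapply Rle_trans. apply pointwise_raw; auto.
set (w := L * y ^ 2).
assert (Hw : 0 <= w) by (unfold w; apply Rmult_le_pos; [lra|apply pow2_ge_0]).
assert (HL2 : 0 < L ^ 2) by (apply pow_lt; lra).
assert (Hy12 : y ^ 14 <= y ^ 12).
{ replace (y ^ 14) with (y ^ 12 * y ^ 2) by ring. assert (0 <= y ^ 12) by (apply pow_le; lra).
  assert (y ^ 2 <= 1) by nra. nra. }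
assert (HB : L * y ^ 6 / 10 + L ^ 2 * y ^ 8 / 14 + L ^ 3 * y ^ 10 / 96 + L ^ 4 * y ^ 14 / 1152 + L ^ 4 * y ^ 12 / 3072
   <= 5 * (1 + w ^ 6) / L ^ 2).
{ assert (E3 : L * y ^ 6 = w ^ 3 / L ^ 2) by (unfold w; field; lra).
  assert (E4 : L ^ 2 * y ^ 8 = w ^ 4 / L ^ 2) by (unfold w; field; lra).
  assert (E5 : L ^ 3 * y ^ 10 = w ^ 5 / L ^ 2) by (unfold w; field; lra).
  assert (E6 : L ^ 4 * y ^ 12 = w ^ 6 / L ^ 2) by (unfold w; field; lra).
  assert (L ^ 4 * y ^ 14 <= L ^ 4 * y ^ 12) by (apply Rmult_le_compat_l; auto; apply pow_le; lra).
  assert (w3 := wpow_le 3 w ltac:(lia) Hw). assert (w4 := wpow_le 4 w ltac:(lia) Hw).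
  assert (w5 := wpow_le 5 w ltac:(lia) Hw). assert (w6 := wpow_le 6 w ltac:(lia) Hw).
  assert (P3 : 0 <= w ^ 3 / L ^ 2) by (apply Rle_mult_inv_pos; auto; apply pow_le; auto).
  assert (P4 : 0 <= w ^ 4 / L ^ 2) by (apply Rle_mult_inv_pos; auto; apply pow_le; auto).
  assert (P5 : 0 <= w ^ 5 / L ^ 2) by (apply Rle_mult_inv_pos; auto; apply pow_le; auto).
  assert (P6 : 0 <= w ^ 6 / L ^ 2) by (apply Rle_mult_inv_pos; auto; apply pow_le; auto).
  assert (Q : forall j, (j <= 6)%nat -> w ^ j / L ^ 2 <= (1 + w ^ 6) / L ^ 2).
  { intros j Hj. unfold Rdiv. apply Rmult_le_compat_r. left; apply Rinv_0_lt_compat; auto. apply wpow_le; auto. }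
  assert (Q3 := Q 3%nat ltac:(lia)). assert (Q4 := Q 4%nat ltac:(lia)).
  assert (Q5 := Q 5%nat ltac:(lia)). assert (Q6 := Q 6%nat ltac:(lia)).
  replace (5 * (1 + w ^ 6) / L ^ 2) with (5 * ((1 + w ^ 6) / L ^ 2)) by (field; lra).
  rewrite E3, E4, E5, E6 in *. lra. }
assert (HE : exp (- (L / 3) * (y * y)) * (1 + w ^ 6) <= (1 + 6 ^ 6 * 720) * exp (- (L / 6) * (y * y))).
{ assert (e1 : exp (- (L / 3) * (y * y)) <= exp (- (L / 6) * (y * y))).
  { destruct (Req_dec y 0) as [E0|E0]. subst y. right. f_equal. ring.
    left. apply exp_increasing. assert (0 < y * y) by nra. nra. }
  assert (e2 : w ^ 6 <= 6 ^ 6 * 720 * exp (w / 6)).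
  { replace (w ^ 6) with (6 ^ 6 * (w / 6) ^ 6) by field.
    replace (6 ^ 6 * 720 * exp (w / 6)) with (6 ^ 6 * (720 * exp (w / 6))) by ring. apply Rmult_le_compat_l. apply pow_le; lra.
    replace 720 with (INR (fact 6)) by (simpl; ring). apply pow_exp_bound. lra. }
  assert (e3 : exp (- (L / 3) * (y * y)) * exp (w / 6) = exp (- (L / 6) * (y * y))).
  { rewrite <- exp_plus. f_equal. unfold w. field. }
  assert (0 < exp (- (L / 3) * (y * y))) by apply exp_pos.
  replace (exp (- (L / 3) * (y * y)) * (1 + w ^ 6)) with (exp (- (L / 3) * (y * y)) + exp (- (L / 3) * (y * y)) * w ^ 6) by ring.
  assert (exp (- (L / 3) * (y * y)) * w ^ 6 <= exp (- (L / 3) * (y * y)) * (6 ^ 6 * 720 * exp (w / 6))).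
  { apply Rmult_le_compat_l; lra. }
  replace (exp (- (L / 3) * (y * y)) * (6 ^ 6 * 720 * exp (w / 6))) with (6 ^ 6 * 720 * (exp (- (L / 3) * (y * y)) * exp (w / 6))) in H0 by ring.
  rewrite e3 in H0. lra. }
apply Rle_trans with (exp (- (L / 3) * (y * y)) * (5 * (1 + w ^ 6) / L ^ 2)).
- apply Rmult_le_compat_l. left; apply exp_pos. auto.
- unfold Kpt. replace (exp (- (L / 3) * (y * y)) * (5 * (1 + w ^ 6) / L ^ 2)) with
    (5 / L ^ 2 * (exp (- (L / 3) * (y * y)) * (1 + w ^ 6))) by (field; lra).
  replace (5 * (1 + 6 ^ 6 * 720) / L ^ 2 * exp (- (L / 6) * (y * y))) with
    (5 / L ^ 2 * ((1 + 6 ^ 6 * 720) * exp (- (L / 6) * (y * y)))) by (field; lra).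
  apply Rmult_le_compat_l. apply Rle_mult_inv_pos; lra. auto.
Qed.

Lemma exp_le_mono x y : x <= y -> exp x <= exp y.
Proof. intros H. destruct (Req_dec x y). subst; lra. left. apply exp_increasing. lra. Qed.

Lemma e_gt2 : 2 < exp 1.
Proof. assert (H := exp_ineq1 1 ltac:(lra)). lra. Qed.

Lemma phi_cont L y : -1 < y -> continuous (phi L) y.
Proof. intros H. apply contR. unfold phi, hh. auto_derive. lra. Qed.

Lemma phi_ex L a b : -1 < a -> -1 < b -> ex_RInt (phi L) a b.
Proof.
intros Ha Hb. apply exRc. intros z Hz. apply phi_cont.
assert (Rmin a b > -1) by (unfold Rmin; destruct (Rle_dec a b); lra). lra.
Qed.

Lemma reduction t : 0 < t ->
  ex_RInt (phi (t / exp 1)) (-1) (exp 1 - 1) /\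
  RInt (integrand t) 0 1 = / exp 1 * exp (t / exp 1) * RInt (phi (t / exp 1)) (-1) (exp 1 - 1).
Proof.
intros Ht.
assert (He := e_gt2).
set (L := t / exp 1).
assert (Hid : forall y, -1 < y -> / exp 1 * integrand t (/ exp 1 * y + / exp 1) = / exp 1 * exp L * phi L y).
{ intros y Hy. rewrite Rmult_assoc. f_equal. unfold integrand, phi, hh, L. rewrite <- exp_plus. f_equal.
  replace (/ exp 1 * y + / exp 1) with ((1 + y) / exp 1) by (field; lra).
  rewrite ln_div by lra. rewrite ln_exp. field. lra. }
assert (E1 : / exp 1 * (-1) + / exp 1 = 0) by (field; lra).
assert (E2 : / exp 1 * (exp 1 - 1) + / exp 1 = 1) by (field; lra).
assert (Hex : ex_RInt (integrand t) (/ exp 1 * (-1) + / exp 1) (/ exp 1 * (exp 1 - 1) + / exp 1)).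
{ rewrite E1, E2. apply integrand_ex. }
assert (Hex2 := ex_RInt_comp_linR (integrand t) (/ exp 1) (/ exp 1) (-1) (exp 1 - 1) Hex).
assert (Hint := RInt_comp_linR (integrand t) (/ exp 1) (/ exp 1) (-1) (exp 1 - 1) Hex).
rewrite E1, E2 in Hint.
assert (Hmin : forall x, Rmin (-1) (exp 1 - 1) < x < Rmax (-1) (exp 1 - 1) -> -1 < x).
{ intros x Hx. rewrite Rmin_left in Hx by lra. lra. }
assert (Hex3 : ex_RInt (fun y => / exp 1 * exp L * phi L y) (-1) (exp 1 - 1)).
{ eapply ex_RInt_extR; [|exact Hex2]. intros x Hx. apply Hid. auto. }
assert (Hc : / exp 1 * exp L <> 0). { assert (0 < / exp 1 * exp L). apply Rmult_lt_0_compat. apply Rinv_0_lt_compat; lra. apply exp_pos. lra. }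
assert (Hex4 : ex_RInt (phi L) (-1) (exp 1 - 1)).
{ apply (ex_RInt_extR (fun y => / (/ exp 1 * exp L) * (/ exp 1 * exp L * phi L y))).
  intros x _. assert (0 < exp L) by apply exp_pos. field; split; lra. apply ex_RInt_scalR. auto. }
split; auto.
rewrite <- Hint. rewrite <- RInt_scalR by auto.
apply RInt_extR. intros x Hx. apply Hid. auto.
Qed.

Lemma split_J L : ex_RInt (phi L) (-1) (exp 1 - 1) ->
  RInt (phi L) (-1) (exp 1 - 1) = RInt (phi L) (-1) (-1/2)
     + RInt (fun y => phi L y + phi L (- y)) 0 (1/2) + RInt (phi L) (1/2) (exp 1 - 1).
Proof.
intros Hex. assert (He := e_gt2).
assert (H1 : ex_RInt (phi L) (-1) (-1/2)) by (apply (ex_RInt_Chasles1R _ _ _ (exp 1 - 1)); auto; lra).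
rewrite <- (RInt_ChaslesR (phi L) (-1) (-1/2) (exp 1 - 1)); auto. 2: apply phi_ex; lra.
rewrite <- (RInt_ChaslesR (phi L) (-1/2) 0 (exp 1 - 1)). 2,3: apply phi_ex; lra.
rewrite <- (RInt_ChaslesR (phi L) 0 (1/2) (exp 1 - 1)). 2,3: apply phi_ex; lra.
rewrite RInt_plusR. 2: apply phi_ex; lra.
2:{ assert (H := ex_RInt_comp_linR (phi L) (-1) 0 0 (1/2)).
    replace (-1 * 0 + 0) with 0 in H by ring. replace (-1 * (1/2) + 0) with (-1/2) in H by field.
    apply (ex_RInt_extR (fun y => -1 * (-1 * phi L (-1 * y + 0)))). intros x _. replace (-1 * x + 0) with (- x) by ring. ring.
    apply ex_RInt_scalR. apply H. apply phi_ex; lra. }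
assert (E : RInt (fun y => phi L (- y)) 0 (1/2) = RInt (phi L) (-1/2) 0).
{ assert (H := RInt_comp_linR (phi L) (-1) 0 0 (1/2)).
  replace (-1 * 0 + 0) with 0 in H by ring. replace (-1 * (1/2) + 0) with (-1/2) in H by field.
  rewrite (RInt_extR _ (fun y => -1 * (-1 * phi L (-1 * y + 0)))).
  2:{ intros x _. replace (-1 * x + 0) with (- x) by ring. ring. }
  rewrite RInt_scalR. rewrite H by (apply phi_ex; lra).
  rewrite <- (opp_RInt_swap (V := R_CompleteNormedModule)). unfold opp; simpl. ring.
  apply phi_ex; lra.
  assert (H2 := ex_RInt_comp_linR (phi L) (-1) 0 0 (1/2)).
  replace (-1 * 0 + 0) with 0 in H2 by ring. replace (-1 * (1/2) + 0) with (-1/2) in H2 by field.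
  apply H2. apply phi_ex; lra. }
rewrite E. rfix. ring.
Qed.

Lemma outer_bounds L : 0 < L -> ex_RInt (phi L) (-1) (exp 1 - 1) ->
  Rabs (RInt (phi L) (-1) (-1/2) + RInt (phi L) (1/2) (exp 1 - 1)) <= 3 * exp (- (L / 10)).
Proof.
intros HL Hex. assert (He := e_gt2). assert (He3 := exp_le_3).
assert (H1 : ex_RInt (phi L) (-1) (-1/2)) by (apply (ex_RInt_Chasles1R _ _ _ (exp 1 - 1)); auto; lra).
assert (H2 : ex_RInt (phi L) (1/2) (exp 1 - 1)) by (apply phi_ex; lra).
assert (B1 : 0 <= RInt (phi L) (-1) (-1/2) <= (-1/2 - -1) * exp (- (L / 10))).
{ split. apply RInt_ge_0; auto. lra. intros; unfold phi; left; apply exp_pos.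
  rewrite <- RInt_constR. apply RInt_le; auto. lra. apply exRc; intros; apply contR; auto_derive; auto.
  intros x Hx. unfold phi. apply exp_le_mono.
  assert (1/10 <= hh (- - x)) by (apply hh_outer_neg; lra). rewrite Ropp_involutive in H. nra. }
assert (B2 : 0 <= RInt (phi L) (1/2) (exp 1 - 1) <= (exp 1 - 1 - 1/2) * exp (- (L / 10))).
{ split. apply RInt_ge_0; auto. lra. intros; unfold phi; left; apply exp_pos.
  rewrite <- RInt_constR. apply RInt_le; auto. lra. apply exRc; intros; apply contR; auto_derive; auto.
  intros x Hx. unfold phi. apply exp_le_mono.
  assert (1/10 <= hh x) by (apply hh_outer_pos; lra). nra. }
assert (0 < exp (- (L / 10))) by apply exp_pos.
rewrite Rabs_right by lra. nra.
Qed.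

Definition Pv L y := - L * y ^ 5 / 72 + y ^ 3 / 72 + y / (24 * L).

Lemma gL_ex L a b : ex_RInt (gL L) a b.
Proof. apply exRc. intros; apply contR; unfold gL; auto_derive; auto. Qed.

Lemma main_int L : 0 < L ->
  RInt (mainf L) 0 (1/2) = 2 * (1 - 1 / (24 * L)) * RInt (gL L) 0 (1/2) + 2 * (Pv L (1/2) * gL L (1/2)).
Proof.
intros HL.
set (q := fun y => gL L y * (1 - L * y ^ 4 / 12 + L ^ 2 * y ^ 6 / 72)).
assert (Hq : ex_RInt q 0 (1/2)) by (apply exRc; intros; apply contR; unfold q, gL; auto_derive; auto).
assert (HD : RInt (fun y => q y - (1 - 1 / (24 * L)) * gL L y) 0 (1/2) = Pv L (1/2) * gL L (1/2) - Pv L 0 * gL L 0).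
{ apply (RInt_derive (fun y => Pv L y * gL L y)).
  - intros x _. unfold q, Pv, gL. auto_derive. lra. field. lra.
  - intros x _. apply contR. unfold q, gL. auto_derive. auto. }
rewrite RInt_minusR in HD; auto. 2: apply ex_RInt_scalR, gL_ex.
rewrite RInt_scalR in HD by apply gL_ex.
replace (Pv L 0) with 0 in HD by (unfold Pv; field; lra).
rewrite (RInt_extR (mainf L) (fun y => 2 * q y)) by (intros; unfold mainf, q; ring).
rewrite RInt_scalR by auto. revert HD. rfix. intros HD. lra.
Qed.

Definition KG := sqrt PI / 2 + 2 / sqrt PI.

Lemma GG_le x : 0 <= x -> GG x <= KG.
Proof.
intros H. assert (Ha := GG_approx x H). unfold KG.
assert (Hs : 0 < sqrt PI) by (apply sqrt_lt_R0; apply PI_RGT_0).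
assert (gs x <= 1). { unfold gs. rewrite <- exp_0. apply exp_le_mono. assert (0 <= x * x) by nra. lra. }
assert (2 / sqrt PI * gs x <= 2 / sqrt PI). { rewrite <- (Rmult_1_r (2 / sqrt PI)) at 2. apply Rmult_le_compat_l; auto. apply Rlt_le, Rdiv_lt_0_compat; lra. }
assert (Habs := Rle_abs (GG x - sqrt PI / 2)). lra.
Qed.

Lemma err_int L : 1 <= L ->
  Rabs (RInt (fun y => phi L y + phi L (- y)) 0 (1/2) - RInt (mainf L) 0 (1/2))
    <= Kpt / L ^ 2 * (KG / sqrt (L / 6)).
Proof.
intros HL.
assert (Hs : ex_RInt (fun y => phi L y + phi L (- y)) 0 (1/2)).
{ apply exRc. intros; apply contR. unfold phi, hh. auto_derive. rewrite Rmin_left, Rmax_right in H by lra. lra. }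
assert (Hm : ex_RInt (mainf L) 0 (1/2)) by (apply exRc; intros; apply contR; unfold mainf, gL; auto_derive; auto).
rewrite <- RInt_minusR by auto.
assert (He : ex_RInt (fun y => Kpt / L ^ 2 * exp (- (L / 6) * (y * y))) 0 (1/2)).
{ apply exRc; intros; apply contR; auto_derive; auto. }
eapply Rle_trans. apply abs_RInt_le. lra. apply ex_RInt_minusR; auto.
eapply Rle_trans. apply RInt_le with (g := fun y => Kpt / L ^ 2 * exp (- (L / 6) * (y * y))). lra.
{ apply (ex_RInt_norm (fun y => phi L y + phi L (- y) - mainf L y)). apply ex_RInt_minusR; auto. }
auto. intros x Hx. apply pointwise; auto; lra.
rewrite RInt_scalR by (apply exRc; intros; apply contR; auto_derive; auto).
apply Rmult_le_compat_l. unfold Kpt. apply Rle_mult_inv_pos. lra. apply pow_lt; lra.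
rewrite gauss_scaled by lra.
assert (Hsq : 0 < sqrt (L / 6)) by (apply sqrt_lt_R0; lra).
unfold Rdiv at 1 2. apply Rmult_le_compat_r. left; apply Rinv_0_lt_compat; auto.
apply GG_le. apply Rmult_le_pos; lra.
Qed.

Lemma main_estimate : exists C, forall L, 1 <= L -> ex_RInt (phi L) (-1) (exp 1 - 1) ->
  Rabs (sqrt L * RInt (phi L) (-1) (exp 1 - 1) - sqrt (2 * PI) * (1 - 1 / (24 * L))) <= C / L ^ 2.
Proof.
destruct (polyexp 0 (1/8) ltac:(lra)) as [C1 H1].
destruct (polyexp 2 (1/8) ltac:(lra)) as [C2 H2].
destruct (polyexp 1 (1/10) ltac:(lra)) as [C3 H3].
assert (Hpi : 0 < sqrt PI) by (apply sqrt_lt_R0; apply PI_RGT_0).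
exists (2 * sqrt 2 * (2 / sqrt PI) * C1 + 2 * C2 + Kpt * KG * sqrt 6 + 3 * C3).
intros L HL Hex.
assert (HL2 : 0 < L ^ 2) by (apply pow_lt; lra).
assert (HsL : 0 < sqrt L) by (apply sqrt_lt_R0; lra).
assert (HsLL : sqrt L <= L).
{ assert (sqrt L * sqrt L = L) by (apply sqrt_sqrt; lra).
  assert (1 <= sqrt L) by (rewrite <- sqrt_1; apply sqrt_le_1; lra). nra. }
assert (Hs2 : 0 < sqrt 2) by (apply sqrt_lt_R0; lra).
assert (Hs6 : 0 < sqrt 6) by (apply sqrt_lt_R0; lra).
assert (EL2 : sqrt (L / 2) = sqrt L / sqrt 2) by (apply sqrt_div; lra).
assert (EL6 : sqrt (L / 6) = sqrt L / sqrt 6) by (apply sqrt_div; lra).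
assert (E2pi : sqrt (2 * PI) = sqrt 2 * sqrt PI) by (apply sqrt_mult; lra || (left; apply PI_RGT_0)).
rewrite split_J by auto.
set (JL := RInt (phi L) (-1) (-1/2)). set (JR := RInt (phi L) (1/2) (exp 1 - 1)).
set (JM := RInt (fun y => phi L y + phi L (- y)) 0 (1/2)).
assert (HO := outer_bounds L ltac:(lra) Hex). fold JL JR in HO.
assert (HErr := err_int L HL). fold JM in HErr.
rewrite main_int in HErr by lra.
assert (Eg2 : RInt (gL L) 0 (1/2) = GG (sqrt (L/2) * (1/2)) / sqrt (L/2)) by (unfold gL; apply gauss_scaled; lra).
rewrite Eg2 in HErr.
set (x0 := sqrt (L / 2) * (1 / 2)) in *.
assert (Hx0 : 0 <= x0) by (unfold x0; apply Rmult_le_pos; [apply sqrt_pos|lra]).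
assert (Hth := GG_approx x0 Hx0).
assert (Egs : gs x0 = exp (- (1/8 * L))).
{ unfold gs, x0. f_equal. replace (sqrt (L / 2) * (1 / 2) * (sqrt (L / 2) * (1 / 2))) with (sqrt (L / 2) * sqrt (L / 2) / 4) by field.
  rewrite sqrt_sqrt by lra. field. }
assert (Eg : gL L (1/2) = exp (- (1/8 * L))) by (unfold gL; f_equal; field).
set (th := GG x0 - sqrt PI / 2) in *.
set (P := Pv L (1/2)) in *.
set (Err := JM - (2 * (1 - 1 / (24 * L)) * (GG x0 / sqrt (L / 2)) + 2 * (P * gL L (1 / 2)))) in *.
assert (Hdec : sqrt L * (JL + JM + JR) - sqrt (2 * PI) * (1 - 1 / (24 * L)) =
   sqrt L * (JL + JR) + sqrt L * Err + 2 * sqrt L * (P * gL L (1/2)) + 2 * sqrt 2 * (1 - 1 / (24 * L)) * th).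
{ unfold Err, th. rewrite EL2, E2pi. field. lra. }
rewrite Hdec.
assert (B1 : Rabs (sqrt L * (JL + JR)) <= 3 * C3 / L ^ 2).
{ rewrite Rabs_mult, Rabs_right by lra.
  apply Rle_trans with (L * (3 * exp (- (L / 10)))).
  apply Rmult_le_compat; auto; try lra. apply Rabs_pos.
  specialize (H3 L HL). rewrite pow_1 in H3. replace (1/10 * L) with (L / 10) in H3 by field.
  replace (3 * C3 / L ^ 2) with (3 * (C3 / L ^ 2)) by (field; lra). lra. }
assert (B2 : Rabs (sqrt L * Err) <= Kpt * KG * sqrt 6 / L ^ 2).
{ rewrite Rabs_mult, (Rabs_right (sqrt L)) by lra.
  apply Rle_trans with (sqrt L * (Kpt / L ^ 2 * (KG / sqrt (L / 6)))).
  apply Rmult_le_compat_l; lra.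
  rewrite EL6. right. field. lra. }
assert (HP : Rabs P <= L).
{ unfold P, Pv. apply Rabs_le_between.
  assert (0 < 1 / (24 * L) <= 1 / 24). { split. apply Rdiv_lt_0_compat; lra.
    unfold Rdiv. rewrite !Rmult_1_l. apply Rinv_le_contravar; lra. }
  replace (- L * (1 / 2) ^ 5 / 72 + (1 / 2) ^ 3 / 72 + 1 / 2 / (24 * L)) with
    (- L / 2304 + 1 / 576 + (1 / 2) * (1 / (24 * L))) by (field; lra).
  lra. }
assert (B3 : Rabs (2 * sqrt L * (P * gL L (1/2))) <= 2 * C2 / L ^ 2).
{ rewrite !Rabs_mult, Rabs_right, (Rabs_right (sqrt L)), (Rabs_right (gL L _)) by (lra || (left; unfold gL; apply exp_pos)).
  rewrite Eg. specialize (H2 L HL).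
  assert (0 < exp (- (1 / 8 * L))) by apply exp_pos.
  apply Rle_trans with (2 * (L ^ 2 * exp (- (1 / 8 * L)))).
  replace (L ^ 2) with (L * L) by ring.
  assert (sqrt L * (Rabs P * exp (- (1 / 8 * L))) <= L * (L * exp (- (1 / 8 * L)))).
  { apply Rmult_le_compat; try lra. apply Rmult_le_pos. apply Rabs_pos. lra.
    apply Rmult_le_compat_r; lra. }
  lra.
  replace (2 * C2 / L ^ 2) with (2 * (C2 / L ^ 2)) by (field; lra). lra. }
assert (B4 : Rabs (2 * sqrt 2 * (1 - 1 / (24 * L)) * th) <= 2 * sqrt 2 * (2 / sqrt PI) * C1 / L ^ 2).
{ assert (0 <= 1 - 1 / (24 * L) <= 1). { assert (0 < 1 / (24 * L) <= 1 / 24). { split. apply Rdiv_lt_0_compat; lra.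
    unfold Rdiv. rewrite !Rmult_1_l. apply Rinv_le_contravar; lra. } lra. }
  rewrite !Rabs_mult. rewrite (Rabs_right 2), (Rabs_right (sqrt 2)), (Rabs_right (1 - _)) by lra.
  rewrite Egs in Hth. specialize (H1 L HL). rewrite pow_O, Rmult_1_l in H1.
  assert (0 < 2 / sqrt PI) by (apply Rdiv_lt_0_compat; lra).
  apply Rle_trans with (2 * sqrt 2 * 1 * (2 / sqrt PI * exp (- (1 / 8 * L)))).
  apply Rmult_le_compat. apply Rmult_le_pos. lra. lra. apply Rabs_pos.
  apply Rmult_le_compat_l. lra. lra. auto.
  replace (2 * sqrt 2 * (2 / sqrt PI) * C1 / L ^ 2) with (2 * sqrt 2 * 1 * (2 / sqrt PI) * (C1 / L ^ 2)) by (field; lra).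
  rewrite (Rmult_assoc (2 * sqrt 2 * 1)). apply Rmult_le_compat_l. lra. apply Rmult_le_compat_l; lra. }
assert (T1 := Rabs_triang (sqrt L * (JL + JR) + sqrt L * Err + 2 * sqrt L * (P * gL L (1 / 2))) (2 * sqrt 2 * (1 - 1 / (24 * L)) * th)).
assert (T2 := Rabs_triang (sqrt L * (JL + JR) + sqrt L * Err) (2 * sqrt L * (P * gL L (1 / 2)))).
assert (T3 := Rabs_triang (sqrt L * (JL + JR)) (sqrt L * Err)).
replace ((2 * sqrt 2 * (2 / sqrt PI) * C1 + 2 * C2 + Kpt * KG * sqrt 6 + 3 * C3) / L ^ 2) with
  (2 * sqrt 2 * (2 / sqrt PI) * C1 / L ^ 2 + 2 * C2 / L ^ 2 + Kpt * KG * sqrt 6 / L ^ 2 + 3 * C3 / L ^ 2) by (field; lra).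
lra.
Qed.

Theorem mainTheorem3 :
  (forall t : R, is_series (fterm t) (t * RInt (integrand t) 0 1)) /\
  (exists C T : R, forall t : R, T < t ->
     exists r : R, Rabs r <= C / t ^ 2 /\
       fser t = sqrt (2 * PI * t / exp 1) * (1 - exp 1 / (24 * t) + r) * exp (t / exp 1)).
Proof.
split. exact part1.
destruct main_estimate as [C HC].
assert (He := e_gt2).
assert (Hpi : 0 < PI) by apply PI_RGT_0.
assert (Hs2pi : 0 < sqrt (2 * PI)) by (apply sqrt_lt_R0; lra).
exists (C * exp 1 ^ 2 / sqrt (2 * PI)), (exp 1). intros t Ht.
assert (Ht0 : 0 < t) by lra.
set (L := t / exp 1).
assert (HL : 1 <= L) by (unfold L; apply (Rmult_le_reg_r (exp 1)); [lra|]; field_simplify; lra).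
destruct (reduction t Ht0) as [Hex Hred]. fold L in Hex, Hred.
set (J := RInt (phi L) (-1) (exp 1 - 1)) in *.
assert (HsL : 0 < sqrt L) by (apply sqrt_lt_R0; lra).
assert (HsLL : sqrt L * sqrt L = L) by (apply sqrt_sqrt; lra).
exists (sqrt L * J / sqrt (2 * PI) - (1 - 1 / (24 * L))).
split.
- specialize (HC L HL Hex). fold J in HC.
  replace (sqrt L * J / sqrt (2 * PI) - (1 - 1 / (24 * L))) with
    ((sqrt L * J - sqrt (2 * PI) * (1 - 1 / (24 * L))) / sqrt (2 * PI)) by (field; lra).
  unfold Rdiv. rewrite Rabs_mult, (Rabs_right (/ sqrt (2 * PI))) by (left; apply Rinv_0_lt_compat; lra).
  replace (C * exp 1 ^ 2 * / sqrt (2 * PI) * / t ^ 2) with (C / L ^ 2 * / sqrt (2 * PI)).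
  2:{ unfold L. field. split; lra. }
  apply Rmult_le_compat_r. left; apply Rinv_0_lt_compat; lra. exact HC.
- unfold fser. rewrite (is_series_unique _ _ (part1 t)). rewrite Hred.
  replace (2 * PI * t / exp 1) with (2 * PI * L) by (unfold L; field; lra).
  rewrite sqrt_mult by lra.
  replace (exp 1 / (24 * t)) with (1 / (24 * L)) by (unfold L; field; lra).
  replace (t * (/ exp 1 * exp L * J)) with (L * J * exp L) by (unfold L; field; lra).
  rewrite <- HsLL at 1. field. lra.
Qed.
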